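(* Let $G$ be a finite group with an endomorphism having the linear identity $-n+m\cdot t\in\mathbb{Z}[t]$, where $m,n$ are integers with $m\cdot n\cdot(m-n)\ne0$. Then either $G$ has $(m\cdot n\cdot(m-n))$-torsion, or $G$ is abelian.
   Context: For an endomorphism $\gamma$ and $s(t)=b_0+\cdots+b_et^e\in\mathbb{Z}[t]$, $x^{s(\gamma)}:=x^{b_0}\gamma(x^{b_1})\cdots\gamma^e(x^{b_e})$; $r(t)$ is an identity of $\gamma$ if there is a decomposition $r=r_1+\cdots+r_k$ in $\mathbb{Z}[t]$ with $x^{r_1(\gamma)}\cdots x^{r_k(\gamma)}=1_G$ for all $x\in G$ (the identity need not be monic or of the single-term form). $G$ has $N$-torsion if some $h\ne1_G$ satisfies $h^N=1_G$. *)

(* Defs.v *)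
From HB Require Import structures.
From mathcomp Require Import all_boot all_order all_algebra all_fingroup.
Set Implicit Arguments. Unset Strict Implicit. Unset Printing Implicit Defensive.
Import GRing.Theory.

Definition gzexp (gT : finGroupType) (x : gT) (z : int) : gT :=
  match z with
  | Posz n => (x ^+ n)%g
  | Negz n => (x ^- n.+1)%g
  end.

(* x^{s(gamma)} := x^{b_0} gamma(x^{b_1}) ... gamma^e(x^{b_e}),
   for s = b_0 + b_1 t + ... + b_e t^e. *)
Definition polyact (gT : finGroupType) (gamma : gT -> gT) (s : {poly int}) (x : gT)
  : gT :=
  \big[mulg/1%g]_(i < size s) iter i gamma (gzexp x s`_i).

Definition is_identity (gT : finGroupType) (gamma : gT -> gT) (r : {poly int}) : Prop :=
  exists rs : seq {poly int},
    (\sum_(ri <- rs) ri)%R = r /\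
    forall x : gT, \big[mulg/1%g]_(ri <- rs) polyact gamma ri x = 1%g.

Definition has_torsion (gT : finGroupType) (N : int) : Prop :=
  exists h : gT, h <> 1%g /\ gzexp h N = 1%g.

(* Main.v *)
Require Import Defs.
From HB Require Import structures.
From mathcomp Require Import all_boot all_order all_algebra all_fingroup.
From mathcomp Require Import all_solvable.
From mathcomp Require Import ring zify.
Import GRing.Theory.

Set Implicit Arguments. Unset Strict Implicit. Unset Printing Implicit Defensive.

Module Aux.
Local Open Scope group_scope.

Lemma fusion (gT : finGroupType) (G P : {group gT}) p a z :
  p.-Sylow(G) P -> abelian P -> 'N_G(P) \subset 'C(P) ->
  z \in G -> a \in P -> a ^ z \in P -> a ^ z = a.
Proof.
move=> sylP abP nc Gz Pa Paz.
set b := a ^ z.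
have sPG := pHall_sub sylP.
have sCG : 'C_G[b] \subset G := subsetIl _ _.
have sPC : P \subset 'C_G[b] by rewrite subsetI sPG sub_cent1 (subsetP abP).
have sPzC : (P :^ z)%G \subset 'C_G[b].
  rewrite subsetI conj_subG //= sub_cent1.
  have abPz : abelian (P :^ z) by rewrite abelianJ.
  by apply: (subsetP abPz); rewrite memJ_conjg.
have s1 := pHall_subl sPC sCG sylP.
have s2 : p.-Sylow('C_G[b]) (P :^ z)%G.
  by apply: pHall_subl sPzC sCG _; rewrite pHallJ.
have [c /setIP[Gc Cc] ec] := Sylow_trans s1 s2.
have Nzc : z * c^-1 \in 'N_G(P).
  rewrite inE groupM ?groupV //=; apply/normP.
  by rewrite conjsgM -/(gval (P :^ z)%G) ec /= conjsgK.
have cz := (centP (subsetP nc _ Nzc)) a Pa.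
have e1 : a ^ (z * c^-1) = a by apply/conjg_fixP/commgP/commute_sym.
rewrite conjgM -/b in e1.
have cb : commute b c^-1 by apply: commute_sym; apply/cent1P; rewrite groupV.
by rewrite -e1; apply/esym/conjg_fixP/commgP.
Qed.

Lemma burnside_perf (gT : finGroupType) (G P : {group gT}) p :
  p.-Sylow(G) P -> abelian P -> 'N_G(P) \subset 'C(P) -> G^`(1) = G -> P :=: 1.
Proof.
move=> sylP abP nc perf.
have sPG := pHall_sub sylP.
have abA : abelian (idm P @* P) by rewrite morphim_idm.
pose V := transfer_morphism G abA.
have VG1 : V @* G = 1.
  have abV : abelian (V @* G) by apply/centsP=> x _ y _; exact: GRing.addrC.
  have h := morphim_der V 1 (subxx G); rewrite (derG1P abV) in h.
  by rewrite -h perf.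
apply/trivgP/subsetP=> g Pg.
have Gg := subsetP sPG g Pg.
have Vg : transfer G abA g = 0%R.
  have : V g \in V @* G := mem_morphim V Gg Gg.
  by rewrite VG1 => /set1P.
set X := transversal (rcosets P G :* <[g]>) G.
have trX := transversalP (rcosets_cycle_partition sPG Gg).
rewrite (transfer_cycle_expansion sPG abA Gg trX) in Vg.
have term x : x \in X -> (g ^+ #|<[g]> : P :* x|) ^ x^-1 = g ^+ #|<[g]> : P :* x|.
  move=> Xx; have Gx := subsetP (transversal_sub trX) x Xx.
  apply: (fusion sylP abP nc); rewrite ?groupV ?groupX //.
  by have := mulg_exp_card_rcosets P g x; rewrite mem_rcoset conjgE invgK mulgA.
have gA : g \in idm P @* P := mem_morphim (idm_morphism P) Pg Pg.
rewrite (eq_bigr (fun x => (FiniteModule.fmod abA g *+ #|<[g]> : P :* x|)%R)) in Vg; last first.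
  by move=> x Xx; rewrite /restrm /= term // /idm FiniteModule.fmodX.
rewrite GRing.sumrMnr (sum_index_rcosets_cycle sPG Gg trX) in Vg.
have e : g ^+ #|G : P| = 1.
  by rewrite -(FiniteModule.fmodK abA (groupX _ gA)) FiniteModule.fmodX // Vg FiniteModule.fmval0.
have cop : coprime #[g] #|G : P|.
  by case/and3P: sylP => _ pP p'i; apply: pnat_coprime (mem_p_elt pP Pg) p'i.
have := generator_coprime g #|G : P|; rewrite cop => /eqP cyc.
by have := cycle_id g; rewrite cyc e cycle1.
Qed.

Section Core.
Variables (gT : finGroupType) (gamma : gT -> gT).
Hypothesis gM : {morph gamma : x y / x * y}.
Variable k : nat.
Hypothesis k_gt0 : 0 < k.
Hypothesis hk : coprime k #|gT|.
Hypothesis hk1 : coprime k.-1 #|gT|.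
Hypothesis HW : forall (rT : finGroupType) (D : {group gT}) (f : {morphism D >-> rT}) (x : gT),
  (forall i, iter i gamma x \in D) ->
  (forall i j, commute (f (iter i gamma x)) (f (iter j gamma x))) ->
  f (gamma x) = f x ^+ k.

Definition gm : {morphism [set: gT] >-> gT} := Morphism (in2W gM).
Lemma gmE x : gm x = gamma x. Proof. by []. Qed.

Lemma gam1 : gamma 1 = 1. Proof. by rewrite -gmE morph1. Qed.
Lemma gamV x : gamma x^-1 = (gamma x)^-1. Proof. by rewrite -!gmE morphV ?inE. Qed.
Lemma gamX x n : gamma (x ^+ n) = gamma x ^+ n. Proof. by rewrite -!gmE morphX ?inE. Qed.
Lemma gamJ x y : gamma (x ^ y) = gamma x ^ gamma y. Proof. by rewrite -!gmE morphJ ?inE. Qed.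

Lemma cop_ord (x : gT) j : coprime j #|gT| -> coprime #[x] j.
Proof. by move=> h; rewrite coprime_sym; apply: coprime_dvdr h; rewrite -cardsT order_dvdG ?inE. Qed.

Lemma in_cycX (x : gT) j : coprime j #|gT| -> x \in <[x ^+ j]>.
Proof.
move=> h; have := generator_coprime x j; rewrite cop_ord // /generator => /eqP <-.
exact: cycle_id.
Qed.

Lemma commute_pow (x y : gT) i j : coprime i #|gT| -> coprime j #|gT| ->
  commute (x ^+ i) (y ^+ j) -> commute x y.
Proof.
move=> hi hj c.
have /cycleP[a ->] := in_cycX x hi; have /cycleP[b ->] := in_cycX y hj.
exact: commuteX2.
Qed.

Lemma pow_eq1 (x : gT) : x ^+ k = 1 -> x = 1.
Proof. by move=> h; have := in_cycX x hk; rewrite h cycle1 => /set1P. Qed.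

Lemma pow1_eq1 (x : gT) : x ^+ k.-1 = 1 -> x = 1.
Proof. by move=> h; have := in_cycX x hk1; rewrite h cycle1 => /set1P. Qed.

Definition inv (A : {set gT}) := forall x, x \in A -> gamma x \in A.

Lemma inv_morph (A : {set gT}) : inv A -> gm @* A \subset A.
Proof. move=> h; apply/subsetP=> _ /morphimP[x _ Ax ->]; exact: h. Qed.

Lemma morph_inv (A : {set gT}) : gm @* A \subset A -> inv A.
Proof. by move=> h x Ax; apply: (subsetP h); rewrite -gmE mem_morphim ?inE. Qed.

Lemma iter_in (A : {set gT}) x i : inv A -> x \in A -> iter i gamma x \in A.
Proof. by move=> h Ax; elim: i => //= i IH; apply: h. Qed.

Lemma D1G (G : {group gT}) x : inv G -> abelian G -> x \in G -> gamma x = x ^+ k.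
Proof.
move=> iG abG Gx.
have := @HW gT [set: gT]%G (idm_morphism [set: gT]) x (fun i => in_setT _).
apply=> i j; rewrite /= /idm.
by apply: (centsP abG); apply: iter_in.
Qed.

Lemma D1cyc x : gamma x \in <[x]> -> gamma x = x ^+ k.
Proof.
move=> h; apply: (@D1G <[x]>%G).
- apply: morph_inv; rewrite morphim_cycle ?inE // cycle_subG; exact: h.
- exact: cycle_abelian.
- exact: cycle_id.
Qed.

Lemma step2 (G : {group gT}) : (forall x, x \in G -> gamma x = x ^+ k) -> abelian G.
Proof.
move=> hG; apply/centsP=> x Gx y Gy.
have hxy a b : a \in G -> b \in G -> (a * b) ^+ k = a ^+ k * b ^+ k.
  by move=> Ga Gb; rewrite -hG ?groupM // gM !hG.
case: k k_gt0 hk hk1 hxy => // j _ hj hj1 hxy.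
have e1 := hxy x y Gx Gy; have e2 := hxy y x Gy Gx.
have e3 : (y * x) ^+ j.+1 = x ^+ j * y ^+ j.+1 * x.
  have -> : y * x = (x * y) ^ x by rewrite conjgE mulgA mulKg.
  by rewrite -conjXg e1 conjgE expgS -!mulgA mulKg.
have e4 : x ^+ j * y ^+ j.+1 * x = y ^+ j.+1 * x ^+ j * x.
  by rewrite -e3 e2 [x ^+ j.+1]expgSr mulgA.
move/mulIg: e4 => e4.
apply: commute_sym; apply: (@commute_pow y x j.+1 j) => //.

Qed.


Lemma stepA (G : {group gT}) : inv G ->
  (forall H : {group gT}, H \proper G -> inv H -> abelian H) ->
  G^`(1) != G -> abelian G.
Proof.
move=> iG IH ndG.
have sKG : G^`(1) \subset G := der1_subG G.
have pKG : G^`(1) \proper G by rewrite properEneq ndG sKG.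
have iK : inv G^`(1).
  apply: morph_inv; rewrite morphim_der ?subsetT //.
  exact: dergS (inv_morph iG).
have abK := IH _ pKG iK.
have powK a : a \in G^`(1) -> gamma a = a ^+ k := D1G iK abK.
have nKG : G \subset 'N(G^`(1)) := der_norm 1 G.
have cong x : x \in G -> (x ^+ k)^-1 * gamma x \in G^`(1).
  move=> Gx.
  have Nl i : iter i gamma x \in 'N(G^`(1)) := subsetP nKG _ (iter_in i iG Gx).
  have abQ : abelian (G / G^`(1)) := sub_der1_abelian (subxx _).
  have eq : coset G^`(1) (gamma x) = coset G^`(1) x ^+ k.
    apply: (@HW _ _ (coset_morphism G^`(1)) x Nl) => i j.
    by apply: (centsP abQ); apply: mem_quotient; apply: iter_in.
  have Nx := subsetP nKG _ Gx.
  have Ngx : gamma x \in 'N(G^`(1)) := subsetP nKG _ (iG _ Gx).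
  apply: coset_idr; first by rewrite groupM ?groupV ?groupX.
  by rewrite morphM ?groupV ?groupX // morphV ?groupX // morphX //= eq mulVg.
case: (pickP (fun x => (x \in G) && (G^`(1) <*> <[x]> == G))) => [x /andP[Gx /eqP defG] | noL].
  rewrite -defG abelianY abK cycle_abelian /= cycle_subG.
  apply/centP => a Ka.
  set c := (x ^+ k)^-1 * gamma x.
  have Kc : c \in G^`(1) := cong x Gx.
  have gx : gamma x = x ^+ k * c by rewrite /c mulKVg.
  have Nx := subsetP nKG _ Gx.
  have Kb : a ^ x \in G^`(1) by rewrite memJ_norm.
  have e : (a ^+ k) ^ (x ^+ k) = (a ^+ k) ^ x.
    have e1 := powK _ Kb.
    rewrite gamJ powK // gx conjgM in e1.
    have Kak : (a ^+ k) ^ (x ^+ k) \in G^`(1) by rewrite memJ_norm ?groupX.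
    have hb : commute ((a ^+ k) ^ (x ^+ k)) c := (centsP abK) _ Kak _ Kc.
    by rewrite conjgE hb mulKg in e1; rewrite e1 conjXg.
  move: (k_gt0) hk hk1 e; case: k => // j _ hj hj1.
  rewrite [x ^+ j.+1]expgSr conjgM => /conjg_inj e.
  have cj : commute (a ^+ j.+1) (x ^+ j) by apply/commgP/conjg_fixP.
  exact: commute_sym (commute_pow hj hj1 cj).
apply: step2 => x Gx.
have nL := noL x; rewrite /= Gx /= in nL.
set L := G^`(1) <*> <[x]>.
have sLG : L \subset G by rewrite join_subG sKG cycle_subG.
have pLG : L \proper G by rewrite properEneq nL sLG.
have Lx : x \in L := subsetP (joing_subr _ _) _ (cycle_id x).
have iL : inv L.
  apply: morph_inv; rewrite morphimY ?subsetT // join_subG.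
  rewrite (subset_trans (inv_morph iK) (joing_subl _ _)) /=.
  rewrite morphim_cycle ?inE // cycle_subG gmE.
  rewrite -(mulKVg (x ^+ k) (gamma x)) groupM ?groupX //.
  exact: subsetP (joing_subl _ _) _ (cong x Gx).
exact: D1G iL (IH _ pLG iL) Lx.
Qed.


Lemma gam_inj1 g : gamma g = 1 -> g = 1.
Proof. by move=> h; apply: pow_eq1; rewrite -D1cyc h ?group1. Qed.

Lemma gam_fix g : gamma g = g -> g = 1.
Proof.
move=> h; have := @D1cyc g; rewrite h => /(_ (cycle_id g)).
rewrite -(prednK k_gt0) expgSr -{1}(mul1g g) => /mulIg e.
by apply: pow1_eq1; rewrite -e.
Qed.

Lemma gam_inj : injective gamma.
Proof.
move=> a b h; apply: (mulIg b^-1); rewrite mulgV; apply: gam_inj1.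
by rewrite gM gamV h mulgV.
Qed.

Lemma card_gm (A : {set gT}) : #|gm @* A| = #|A|.
Proof. by rewrite morphimE setTI card_in_imset // => x y _ _; apply: gam_inj. Qed.

Lemma inv_morphim (A : {group gT}) : inv A -> gm @* A = A.
Proof. by move=> iA; apply/eqP; rewrite eqEcard inv_morph // card_gm leqnn. Qed.

Lemma psi_surj (A : {group gT}) g : inv A -> g \in A ->
  exists2 h, h \in A & g = h * (gamma h)^-1.
Proof.
move=> iA Ag.
have injp : injective (fun h => h * (gamma h)^-1).
  move=> a b /= e.
  have e2 : b^-1 * a = (gamma b)^-1 * gamma a.
    by apply: (mulIg (gamma a)^-1); rewrite mulgK -mulgA e mulKg.
  have := @gam_fix (b^-1 * a); rewrite gM gamV -e2 => /(_ erefl).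
  by move=> h; rewrite -(mulKVg b a) h mulg1.
have sub : [set h * (gamma h)^-1 | h in A] \subset A.
  by apply/subsetP=> _ /imsetP[h Ah ->]; rewrite groupM ?groupV ?iA.
have : [set h * (gamma h)^-1 | h in A] == A.
  by rewrite eqEcard sub (card_imset _ injp) leqnn.
by move/eqP=> eA; move: Ag; rewrite -{1}eA => /imsetP[h Ah ->]; exists h.
Qed.

Lemma phi_surj (A : {group gT}) g : inv A -> g \in A ->
  exists2 h, h \in A & g = h^-1 * gamma h.
Proof.
move=> iA Ag.
have injp : injective (fun h => h^-1 * gamma h).
  move=> a b /= e.
  have e2 : gamma b * (gamma a)^-1 = b * a^-1.
    rewrite -[gamma a](mulKVg a) e -[gamma b](mulKVg b).
    by rewrite !invMg invgK mulKVg !mulgA mulgKV mulgV mul1g.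
  have := @gam_fix (b * a^-1); rewrite gM gamV e2 => /(_ erefl).
  by move=> h; rewrite -(mulgKV a b) h mul1g.
have sub : [set h^-1 * gamma h | h in A] \subset A.
  by apply/subsetP=> _ /imsetP[h Ah ->]; rewrite groupM ?groupV ?iA.
have : [set h^-1 * gamma h | h in A] == A.
  by rewrite eqEcard sub (card_imset _ injp) leqnn.
by move/eqP=> eA; move: Ag; rewrite -{1}eA => /imsetP[h Ah ->]; exists h.
Qed.


Lemma stepB (G : {group gT}) : inv G ->
  (forall H : {group gT}, H \proper G -> inv H -> abelian H) ->
  G^`(1) = G -> abelian G.
Proof.
move=> iG IH perf.
have [abG|nabG] := boolP (abelian G); first by [].
have ntG : G :!=: 1 by apply: contraNneq nabG => ->; apply: abelian1.
have G_gt1 : 1 < #|G| by rewrite cardG_gt1.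
set p := pdiv #|G|.
have [P0 sylP0] := Sylow_exists p G.
have sylg : p.-Sylow(G) (gm @* P0).
  rewrite pHallE (subset_trans (morphimS gm (pHall_sub sylP0)) (inv_morph iG)) /=.
  by rewrite card_gm (card_Hall sylP0).
have [g Gg defg] := Sylow_trans sylP0 sylg.
have [h Gh eg] := psi_surj iG Gg.
set P := (P0 :^ h)%G.
have sylP : p.-Sylow(G) P by rewrite pHallJ.
have gP : gm @* P = P.
  by rewrite /= morphimJ ?inE // defg eg -conjsgM gmE mulgKV.
have iP : inv P by apply: morph_inv; rewrite gP.
have sPG := pHall_sub sylP.
have pP : P \proper G.
  rewrite properEneq sPG andbT; apply/eqP => PG.
  have solG : solvable G by rewrite -PG (pgroup_sol (pHall_pgroup sylP)).
  have := sol_der1_proper solG (subxx G) ntG.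
  by rewrite perf properE subxx.
have abP := IH _ pP iP.
have powP := D1G iP abP.
have nPc : 'N_G(P) \subset 'C(P).
  have iN : inv 'N_G(P).
    move=> y /setIP[Gy Ny]; rewrite inE iG //=; apply/normP.
    by rewrite -{1}gP -gmE -morphimJ ?inE // (normP Ny) gP.
  have key y : y \in 'N_G(P) -> gamma y * y^-1 \in 'C(P).
    case/setIP=> Gy Ny; apply/centP => a Pa.
    have Pb : a ^ y \in P by rewrite memJ_norm.
    have e1 := powP _ Pb.
    rewrite gamJ powP // -conjXg in e1.
    have e2 : (a ^+ k) ^ (gamma y * y^-1) = a ^+ k.
      by rewrite conjgM e1 -conjgM mulgV conjg1.
    have c1 : commute (a ^+ k) ((gamma y * y^-1) ^+ 1).
      by rewrite expg1; apply/commgP/conjg_fixP.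
    apply: commute_sym; apply: (commute_pow hk _ c1).
    by rewrite /coprime gcd1n.
  apply/subsetP => z Nz.
  have [y Ny ez] := phi_surj iN Nz.
  have ez' : z = (gamma y * y^-1) ^ y.
    by rewrite ez conjgE mulgKV.
  have Ny' : y \in 'N(P) by case/setIP: Ny.
  by rewrite ez' -(normP Ny') centJ memJ_conjg key.
have P1 := burnside_perf sylP abP nPc perf.
have : 1 < #|P|.
  by rewrite (card_Hall sylP) p_part_gt1 pi_pdiv.
by rewrite P1 cards1.
Qed.

Lemma main_ind (G : {group gT}) : inv G -> abelian G.
Proof.
move: {2}#|G| (leqnn #|G|) => n; elim: n G => [|n IHn] G leG iG.
  by have := cardG_gt0 G; rewrite ltnNge leG.
have IH (H : {group gT}) : H \proper G -> inv H -> abelian H.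
  by move=> pH iH; apply: IHn iH; rewrite -ltnS (leq_trans (proper_card pH)).
have [perf|nperf] := eqVneq G^`(1) G.
  exact: stepB iG IH perf.
exact: stepA iG IH nperf.
Qed.

End Core.

Lemma gzexp_morph (aT rT : finGroupType) (D : {group aT}) (f : {morphism D >-> rT}) y z :
  y \in D -> f (gzexp y z) = gzexp (f y) z.
Proof. by move=> Dy; case: z => n /=; rewrite ?morphV ?groupX // morphX. Qed.

Lemma gzexp_in (gT : finGroupType) (A : {group gT}) y z : y \in A -> gzexp y z \in A.
Proof. by move=> Ay; case: z => n /=; rewrite ?groupV groupX. Qed.

Lemma fmod_gzexp (gT : finGroupType) (A : {group gT}) (abA : abelian A) y z :
  y \in A -> FiniteModule.fmod abA (gzexp y z) = (FiniteModule.fmod abA y *~ z)%R.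
Proof.
by move=> Ay; case: z => n /=; rewrite ?FiniteModule.fmodV FiniteModule.fmodX.
Qed.

Lemma iter_gzexp (gT : finGroupType) (gamma : gT -> gT) (gM : {morph gamma : x y / x * y}) i y z :
  iter i gamma (gzexp y z) = gzexp (iter i gamma y) z.
Proof.
pose gm : {morphism [set: gT] >-> gT} := Morphism (in2W gM).
elim: i => //= i ->; exact: (gzexp_morph gm z (in_setT _)).
Qed.

Lemma polyact_widen (gT : finGroupType) (gamma : gT -> gT) (gM : {morph gamma : x y / x * y})
   (s : {poly int}) (x : gT) N : (size s <= N)%N ->
  polyact gamma s x = \big[mulg/1]_(i < N) gzexp (iter i gamma x) s`_i.
Proof.
pose gm : {morphism [set: gT] >-> gT} := Morphism (in2W gM).
move=> hN; rewrite /polyact (big_ord_widen N (fun j => iter j gamma (gzexp x s`_j)) hN) big_mkcond /=.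
apply: eq_bigr => i _; rewrite (iter_gzexp gM); case: ifP => // /negbT.
by rewrite -leqNgt => hs; rewrite nth_default //=.
Qed.

Lemma fmod_prod (gT : finGroupType) (A : {group gT}) (abA : abelian A) I (r : seq I) (P : pred I) F :
  (forall i, P i -> F i \in A) ->
  FiniteModule.fmod abA (\prod_(i <- r | P i) F i) = (\sum_(i <- r | P i) FiniteModule.fmod abA (F i))%R.
Proof.
move=> hF; elim: r => [|i r IH]; first by rewrite !big_nil FiniteModule.fmod1.
rewrite !big_cons; case: ifP => Pi //.
by rewrite FiniteModule.fmodM ?hF ?group_prod // IH.
Qed.

Lemma HW_of_id (gT : finGroupType) (gamma : gT -> gT) (gM : {morph gamma : x y / x * y})
  (m n : int) (rs : seq {poly int})
  (hsum : (\sum_(ri <- rs) ri)%R = (m *: 'X - n%:P)%R)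
  (hprod : forall x, \big[mulg/1]_(ri <- rs) polyact gamma ri x = 1)
  (u v : int) (huv : (u * m + v * (#|gT|%:Z) = 1)%R) :
  forall (rT : finGroupType) (D : {group gT}) (f : {morphism D >-> rT}) x,
   (forall i, iter i gamma x \in D) ->
   (forall i j, commute (f (iter i gamma x)) (f (iter j gamma x))) ->
   f (gamma x) = f x ^+ `|((n * u) %% (#|gT|%:Z))%Z|%N.
Proof.
move=> rT D f x inD cm.
pose M := \max_(ri <- rs) size ri.
pose N := M.+2.
have hN ri : ri \in rs -> (size ri <= N)%N.
  move=> h; apply: (leq_trans (@leq_bigmax_seq _ rs predT (fun r => size r) ri h isT)).
  by rewrite /N /M; exact: leq_trans (leqnSn _) (leqnSn _).
pose a := fun i => f (iter i gamma x).
pose S := [set a (val i) | i : 'I_N].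
have abS : abelian <<S>>.
  by rewrite abelian_gen; apply/centsP => _ /imsetP[i _ ->] _ /imsetP[j _ ->]; exact: cm.
pose A := <<S>>%G.
have Aa i : (i < N)%N -> a i \in A.
  by move=> h; apply: mem_gen; apply/imsetP; exists (Ordinal h).
have pin ri : polyact gamma ri x \in D.
  by rewrite /polyact group_prod // => i _; rewrite (iter_gzexp gM) gzexp_in.
have e : \prod_(ri <- rs) \prod_(i < N) gzexp (a i) ri`_i = 1.
  transitivity (\prod_(ri <- rs) f (polyact gamma ri x)); last first.
    by rewrite -morph_prod ?hprod ?morph1 // => ri _; apply: pin.
  rewrite big_seq [RHS]big_seq; apply: eq_bigr => ri hri.
  rewrite (polyact_widen gM _ (hN _ hri)) morph_prod => [|i _]; last exact: gzexp_in.
  by apply: eq_bigr => i _; rewrite gzexp_morph.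
pose w := fun i => FiniteModule.fmod abS (a i).
have e2 : (\sum_(ri <- rs) \sum_(i < N) w i *~ ri`_i)%R = 0%R.
  transitivity (FiniteModule.fmod abS (\prod_(ri <- rs) \prod_(i < N) gzexp (a i) ri`_i)); last first.
    by rewrite e FiniteModule.fmod1.
  rewrite fmod_prod => [|ri _]; last first.
    by apply: group_prod => i _; apply: gzexp_in; apply: Aa.
  apply: eq_bigr => ri _; rewrite fmod_prod => [|i _]; last by apply: gzexp_in; apply: Aa.
  by apply: eq_bigr => i _; rewrite fmod_gzexp //; apply: Aa.
rewrite exchange_big /= in e2.
have e3 i : (\sum_(ri <- rs) w i *~ ri`_i)%R = (w i *~ (m *: 'X - n%:P)`_i)%R.
  by rewrite -hsum coef_sum; apply/esym/(big_morph _ (mulrzDr (w i)) (mulr0z (w i))).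
rewrite (eq_bigr _ (fun (i : 'I_N) _ => e3 i)) /N !big_ord_recl big1 /= in e2; last first.
  by move=> i _; rewrite coefB coefZ coefX coefC /= mulr0 subr0 mulr0z.
rewrite !coefB !coefZ !coefX !coefC /= mulr0 mulr1 sub0r subr0 addr0 in e2.
have e4 : (w 1%N *~ m = w 0%N *~ n)%R.
  by move/eqP: e2; rewrite mulrNz addrC subr_eq0 => /eqP.
have ex i : (i < N)%N -> (w i *~ #|gT|%:Z = 0)%R.
  move=> h; rewrite /w -pmulrn -FiniteModule.fmodX ?Aa //.
  by rewrite /a -morphX // -cardsT expg_cardG ?inE // morph1 FiniteModule.fmod1.
have N1 : (1 < N)%N by [].
have N0 : (0 < N)%N by [].
have e0 : (#|gT|%:Z != 0)%R by rewrite eqz_nat -lt0n -cardsT cardG_gt0.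
have e5 : w 1%N = (w 0%N *~ ((n * u) %% #|gT|%:Z)%Z)%R.
  transitivity (w 1%N *~ (u * m + v * #|gT|%:Z))%R; first by rewrite huv mulr1z.
  rewrite mulrzDr (mulrC u m) [(v * _)%R]mulrC !mulrzA e4 ex // mul0rz addr0.
  rewrite -mulrzA {1}(divz_eq (n * u) (#|gT|%:Z)%R) mulrzDr (mulrC _ (#|gT|%:Z)%R).
  by rewrite mulrzA ex // mul0rz add0r.
have ge0 : (0 <= ((n * u) %% #|gT|%:Z)%Z)%R by rewrite modz_ge0.
rewrite -(gez0_abs ge0) -pmulrn /w -FiniteModule.fmodX ?Aa // in e5.
rewrite -[f (gamma x)]/(a 1%N) -[f x]/(a 0%N).
rewrite -(FiniteModule.fmodK abS (Aa 1%N N1)) -(FiniteModule.fmodK abS (groupX _ (Aa 0%N N0))).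
by rewrite e5.
Qed.

Lemma gzexp_eq1 (gT : finGroupType) (h : gT) (z : int) : gzexp h z = 1 -> h ^+ `|z|%N = 1.
Proof. by case: z => n //= /eqP; rewrite invg_eq1 => /eqP. Qed.

Lemma gzexp_of_abs (gT : finGroupType) (h : gT) (z : int) : h ^+ `|z|%N = 1 -> gzexp h z = 1.
Proof. by case: z => n /= h1; rewrite h1 ?invg1. Qed.

Lemma coprimez_abs (a b : int) : coprimez a b = coprime `|a|%N `|b|%N.
Proof. by []. Qed.

End Aux.
Import Aux.

Theorem corollary7p3 (gT : finGroupType) (gamma : gT -> gT)
  (gamma_morph : {morph gamma : x y / (x * y)%g})
  (m n : int) (hmn : (m * n * (m - n))%R <> 0%R)
  (hid : is_identity gamma (m *: 'X - n%:P)%R) :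
  has_torsion gT (m * n * (m - n))%R \/ abelian [set: gT].
Proof.
case: hid => rs [hsum hprod].
case: (boolP [exists h : gT, (h != 1%g) && (gzexp h (m * n * (m - n))%R == 1%g)]).
  case/existsP=> h /andP[nh /eqP eh]; left; exists h; split => //; exact/eqP.
move=> noT; right.
have notor (h : gT) : gzexp h (m * n * (m - n))%R = 1%g -> h = 1%g.
  move=> e; case: (h =P 1%g) => // /eqP nh; case/negP: noT.
  by apply/existsP; exists h; rewrite nh e eqxx.
set e := #|gT|.
have e_gt0 : (0 < e)%N by rewrite /e -cardsT cardG_gt0.
have cop : coprime e `|(m * n * (m - n))%R|%N.
  rewrite /coprime; set d := gcdn _ _.
  have d_gt0 : (0 < d)%N by rewrite /d gcdn_gt0 e_gt0.
  case: (ltngtP d 1) => //; first by rewrite ltnS leqn0 => /eqP d0; rewrite d0 in d_gt0.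
  move=> d_gt1; have pr := pdiv_prime d_gt1.
  have pd : (pdiv d %| d)%N := pdiv_dvd d.
  have pe : (pdiv d %| #|[set: gT]|)%N by rewrite cardsT (dvdn_trans pd) // dvdn_gcdl.
  have [x _ ox] := Cauchy pr pe.
  have x1 : x = 1%g.
    apply: notor.
    apply: gzexp_of_abs; apply/eqP; rewrite -order_dvdn ox (dvdn_trans pd) //.
    exact: dvdn_gcdr.
  by move: (prime_gt1 pr); rewrite -ox x1 order1.
rewrite !abszM !coprimeMr in cop.
case/andP: cop => /andP[cm cn] cmn.
have [e1|e_gt1] := eqVneq e 1%N.
  apply/centsP=> x _ y _.
  have triv (z : gT) : z = 1%g.
    by have := expg_cardG (in_setT z); rewrite cardsT -/e e1 expg1.
  by rewrite (triv x) (triv y).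
have e_gt1' : (1 < e)%N by rewrite ltn_neqAle eq_sym e_gt1 e_gt0.
have : coprimez m e%:Z by rewrite coprimez_abs coprime_sym.
case/coprimezP => [[u v]] /= huv.
have [[x1 y1] /= hn] : exists uv : int * int, (uv.1 * n + uv.2 * e%:Z = 1)%R.
  by apply/coprimezP; rewrite coprimez_abs coprime_sym.
have [[x2 y2] /= hmn2] : exists uv : int * int, (uv.1 * (m - n) + uv.2 * e%:Z = 1)%R.
  by apply/coprimezP; rewrite coprimez_abs coprime_sym.
set kz := ((n * u) %% e%:Z)%Z.
set q := ((n * u) %/ e%:Z)%Z.
have e0 : (e%:Z != 0)%R by rewrite eqz_nat -lt0n.
have kz_ge0 : (0 <= kz)%R by rewrite modz_ge0.
have dk : (n * u = q * e%:Z + kz)%R by rewrite /q /kz -divz_eq.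
set t := (n * v + m * q)%R.
have R1 : (m * kz = n - t * e%:Z)%R.
  have -> : kz = (n * u - q * e%:Z)%R by rewrite dk addrC addKr.
  apply/eqP; rewrite -subr_eq0; apply/eqP.
  transitivity (n * (u * m + v * e%:Z - 1))%R; first by rewrite /t; ring.
  by rewrite huv subrr mulr0.
have ck : coprimez kz e%:Z.
  apply/coprimezP; exists (x1 * m, x1 * t + y1)%R => /=.
  rewrite -hn -mulrA R1; ring.
have k_gt0 : (0 < `|kz|)%N.
  rewrite absz_gt0; apply/eqP => k0; move: ck; rewrite k0 coprimez_abs /= /coprime gcd0n.
  by move=> /eqP e1'; rewrite e1' eqxx in e_gt1.
have ck1 : coprimez (kz - 1) e%:Z.
  apply/coprimezP; exists (- (x2 * m), y2 - x2 * t)%R => /=.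
  transitivity (- x2 * (m * kz) + x2 * m + (y2 - x2 * t) * e%:Z)%R; first by ring.
  rewrite R1 -hmn2; ring.
have hk : coprime `|kz|%N #|gT| by move: ck; rewrite coprimez_abs => h; exact: h.
have hk1 : coprime `|kz|%N.-1 #|gT|.
  have h : coprime `|(kz - 1)%R|%N `|(e%:Z)%R|%N by rewrite -coprimez_abs.
  have ek : `|(kz - 1)%R|%N = `|kz|%N.-1 by move: kz_ge0 k_gt0; lia.
  by move: h; rewrite ek => h'; exact: h'.
have HW := HW_of_id gamma_morph hsum hprod huv.
have := @main_ind gT gamma gamma_morph `|kz|%N k_gt0 hk hk1 HW [set: gT]%G.
by apply=> x _; rewrite inE.
Qed.
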